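(* Let $U,V\in\mathbb{R}_{\max}^{m\times n}$, $b,d\in\mathbb{R}_{\max}^m$, $p\in\mathbb{R}_{\max}^n$, $q\in(\mathbb{R}\cup\{+\infty\})^n$, with $A$, $B(\lambda)$, $\Phi$, strategies and game graph as in the context. Then Problem (P) is unbounded, i.e. $\Phi(\lambda)\geq 0$ for all $\lambda\in\mathbb{R}$, if and only if there exists a positional strategy $\sigma$ of Max such that every cycle of the game graph defined by $A$ and $B^{\sigma}(0)$ contains only nodes of Max from the group $[m]$ and has nonnegative weight.
   Context: Max-plus notation: $\mathbb{R}_{\max}=\mathbb{R}\cup\{-\infty\}$, $a\oplus b=\max(a,b)$, $a\otimes b=a+b$, extended to matrices as usual. $I$ is the max-plus identity (0 on the diagonal, $-\infty$ elsewhere). The conjugate $a^-$ is $-a$ for real $a$, $+\infty$ for $a=-\infty$, $-\infty$ for $a=+\infty$; $q^-$ is the row vector $(q_i^-)$. Problem (P): minimize $x^-\otimes p\oplus q^-\otimes x$ over $x\in\mathbb{R}^n$ subject to $U\otimes x\oplus b\le V\otimes x\oplus d$. Set $$A=\begin{pmatrix} U & b\\ -\infty & p\\ q^- & -\infty\end{pmatrix},\qquad B(\lambda)=\begin{pmatrix} V & d\\ \lambda\otimes I & -\infty\\ -\infty & \lambda\end{pmatrix}$$ ($(m+n+1)\times(n+1)$ matrices; middle block row of $A$ is $(-\infty_{n\times n},p)$, last row $(q^-,-\infty)$; $\lambda\otimes I$ has $\lambda$ on the diagonal, $-\infty$ elsewhere; last row of $B(\lambda)$ is $(-\infty,\dots,-\infty,\lambda)$).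 Game graph defined by $(m+n+1)\times(n+1)$ matrices $A',B'$: nodes of Max are rows $1,\dots,m+n+1$, the first $m$ rows forming the group $[m]$; nodes of Min are columns $1,\dots,n+1$; arc Max $i\to$ Min $l$ of weight $b'_{il}$ when $b'_{il}\ne-\infty$; arc Min $j\to$ Max $i$ of weight $-a'_{ij}$ when $a'_{ij}\ne-\infty$; cycle weight is the sum of arc weights. A positional strategy of Max is a map $\sigma:\{1,\dots,m+n+1\}\to\{1,\dots,n+1\}$ with $B(\lambda)_{i\sigma(i)}\ne-\infty$ for all $i$; $B^\sigma(\lambda)$ keeps the entries $B(\lambda)_{i\sigma(i)}$ and sets all others to $-\infty$. For matrices $A',B'$, $A'^\sharp B'$ denotes the map $f_j(x)=\min_{k:a'_{kj}\ne-\infty}(-a'_{kj}+\max_{l:b'_{kl}\ne-\infty}(b'_{kl}+x_l))$, with cycle-time vector $\chi=\lim_k f^k(0)/k$; $\Phi(\lambda)=\min_i\chi_i(A^\sharp B(\lambda))$. (Standing assumption: every column of $A$ and every row of $B(\lambda)$ has a finite entry.) The condition $\Phi(\lambda)\ge 0$ expresses that (P) has a feasible $x\in\mathbb{R}^n$ with objective value at most $\lambda$. *)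

(* Defs.v *)
(* Max-plus scalars are extended reals
   \bar R (with hypotheses excluding +oo / -oo where the paper does). *)
From HB Require Import structures.
From mathcomp Require Import all_boot all_order all_algebra.
From mathcomp Require Import all_classical all_reals all_analysis.
Set Implicit Arguments. Unset Strict Implicit. Unset Printing Implicit Defensive.
Import Order.TTheory GRing.Theory Num.Theory numFieldNormedType.Exports.
Local Open Scope ring_scope.
Local Open Scope ereal_scope.

Section MaxPlus.
Variable R : realType.

Definition mpscal (k : nat) (lam : \bar R) : 'M[\bar R]_k :=
  \matrix_(i, j) if i == j then lam else -oo.

(* conjugate of a row vector: a^- = -a, (-oo)^- = +oo, (+oo)^- = -oo *)
Definition conjv (n : nat) (q : 'rV[\bar R]_n) : 'rV[\bar R]_n :=
  \row_j (- q ord0 j).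

Definition matA (m n : nat) (U : 'M[\bar R]_(m, n)) (b : 'cV[\bar R]_m)
  (p : 'cV[\bar R]_n) (q : 'rV[\bar R]_n) : 'M[\bar R]_(m + n + 1, n + 1) :=
  col_mx (col_mx (row_mx U b) (row_mx (const_mx -oo) p))
         (row_mx (conjv q) (const_mx -oo)).

Definition matB (m n : nat) (V : 'M[\bar R]_(m, n)) (d : 'cV[\bar R]_m)
  (lam : R) : 'M[\bar R]_(m + n + 1, n + 1) :=
  col_mx (col_mx (row_mx V d) (row_mx (mpscal n lam%:E) (const_mx -oo)))
         (row_mx (const_mx -oo) (const_mx lam%:E)).

Definition sharp (r c : nat) (A B : 'M[\bar R]_(r, c)) (x : 'I_c -> R) : 'I_c -> R :=
  fun j => fine (\big[Order.min/+oo]_(k < r | A k j \is a fin_num)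
                  (- A k j + \big[Order.max/-oo]_(l < c | B k l \is a fin_num)
                                (B k l + (x l)%:E))).

Definition cycle_time (r c : nat) (A B : 'M[\bar R]_(r, c)) (j : 'I_c) : R :=
  limn (fun k : nat => (iter k (sharp A B) (fun _ => 0%R) j / k%:R)%R).

(* Phi = min_j chi_j(A^# B) (taken in \bar R to have a neutral element) *)
Definition Phi (r c : nat) (A B : 'M[\bar R]_(r, c)) : \bar R :=
  \big[Order.min/+oo]_(j < c) (cycle_time A B j)%:E.

Definition is_strategy (r c : nat) (B : 'M[\bar R]_(r, c)) (sigma : 'I_r -> 'I_c) :=
  forall i, B i (sigma i) != -oo.

Definition strat_restrict (r c : nat) (B : 'M[\bar R]_(r, c)) (sigma : 'I_r -> 'I_c)
  : 'M[\bar R]_(r, c) :=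
  \matrix_(i, j) if j == sigma i then B i j else -oo.

(* A cycle of the game graph of (A', B') is encoded by the nonempty sequence
   s = [(i_0, j_0); ...; (i_{t-1}, j_{t-1})] of alternating Max nodes i_k
   (rows) and Min nodes j_k (columns), with arcs i_k -> j_k (b'_{i_k j_k}
   finite) and j_k -> i_{k+1 mod t} (a'_{i_{k+1} j_k} finite). *)
Definition game_cycle (r c : nat) (A B : 'M[\bar R]_(r, c))
  (s : seq ('I_r * 'I_c)) : bool :=
  (s != [::]) &&
  all (fun xy : ('I_r * 'I_c) * ('I_r * 'I_c) =>
         (B xy.1.1 xy.1.2 \is a fin_num) && (A xy.2.1 xy.1.2 \is a fin_num))
      (zip s (rot 1 s)).

Definition cycle_weight (r c : nat) (A B : 'M[\bar R]_(r, c))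
  (s : seq ('I_r * 'I_c)) : R :=
  (\sum_(xy <- zip s (rot 1 s)) (fine (B xy.1.1 xy.1.2) - fine (A xy.2.1 xy.1.2)))%R.

End MaxPlus.

(* Main.v *)
Require Import Defs.
From HB Require Import structures.
From mathcomp Require Import all_boot all_order all_algebra.
From mathcomp Require Import all_classical all_reals all_analysis.
From mathcomp Require Import ring lra.
Import Order.TTheory GRing.Theory Num.Theory numFieldNormedType.Exports.
Local Open Scope ring_scope.
Local Open Scope ereal_scope.


Section SeqSums.
Variable R : realType.
Local Open Scope ring_scope.

Lemma sum_const_seq (T : Type) (s : seq T) (a : R) :
  \sum_(t <- s) a = a * (size s)%:R.
Proof.
elim: s => [|t s IH]; first by rewrite big_nil mulr0.
by rewrite big_cons IH /= -natr1 mulrDr mulr1 addrC.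
Qed.

Lemma sum_zip1 (S T : Type) (s : seq S) (t : seq T) (F : S -> R) :
  (size s <= size t)%N -> \sum_(p <- zip s t) F p.1 = \sum_(a <- s) F a.
Proof. by move=> H; rewrite -[in RHS](unzip1_zip H) big_map. Qed.

Lemma sum_zip2 (S T : Type) (s : seq S) (t : seq T) (F : T -> R) :
  (size t <= size s)%N -> \sum_(p <- zip s t) F p.2 = \sum_(a <- t) F a.
Proof. by move=> H; rewrite -[in RHS](unzip2_zip H) big_map. Qed.

Lemma sum_rot (T : eqType) (s : seq T) (F : T -> R) :
  \sum_(a <- rot 1 s) F a = \sum_(a <- s) F a.
Proof. by apply: perm_big; rewrite perm_rot. Qed.

Lemma sum_zip_rot1 (T : eqType) (s : seq T) (F : T -> R) :
  \sum_(p <- zip s (rot 1 s)) F p.1 = \sum_(a <- s) F a.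
Proof. by rewrite sum_zip1 // size_rot. Qed.

Lemma sum_zip_rot2 (T : eqType) (s : seq T) (F : T -> R) :
  \sum_(p <- zip s (rot 1 s)) F p.2 = \sum_(a <- s) F a.
Proof. by rewrite sum_zip2 ?size_rot // sum_rot. Qed.

End SeqSums.

Lemma mem_zip2 (S T : eqType) (s : seq S) (t : seq T) p :
  (size t <= size s)%N -> p \in zip s t -> p.2 \in t.
Proof. by move=> H Hp; rewrite -(unzip2_zip H); apply: map_f. Qed.

Lemma mem_zip1 (S T : eqType) (s : seq S) (t : seq T) p :
  (size s <= size t)%N -> p \in zip s t -> p.1 \in s.
Proof. by move=> H Hp; rewrite -(unzip1_zip H); apply: map_f. Qed.

Section Walks.
Variables (R : realType) (r c : nat) (A Bp : 'M[\bar R]_(r, c)).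
Local Open Scope ring_scope.

Fixpoint wok (v : 'I_c) (s : seq ('I_r * 'I_c)) : bool :=
  if s is x :: s' then [&& Bp x.1 x.2 \is a fin_num, A x.1 v \is a fin_num & wok x.2 s']
  else true.

Fixpoint wwt (v : 'I_c) (s : seq ('I_r * 'I_c)) : R :=
  if s is x :: s' then (fine (Bp x.1 x.2) - fine (A x.1 v)) + wwt x.2 s' else 0.

Lemma wok_cat v s1 s2 : wok v (s1 ++ s2) = wok v s1 && wok (last v (map snd s1)) s2.
Proof.
elim: s1 v => [//|x s1 IH] v /=.
by rewrite IH !andbA.
Qed.

Lemma wwt_cat v s1 s2 : wwt v (s1 ++ s2) = wwt v s1 + wwt (last v (map snd s1)) s2.
Proof.
elim: s1 v => [|x s1 IH] v /=; first by rewrite add0r.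
by rewrite IH addrA.
Qed.

Definition cpred (xy : ('I_r * 'I_c) * ('I_r * 'I_c)) :=
  (Bp xy.1.1 xy.1.2 \is a fin_num) && (A xy.2.1 xy.1.2 \is a fin_num).

Lemma CW s p q : Bp p.1 p.2 \is a fin_num -> wok p.2 s ->
  A q.1 (last p s).2 \is a fin_num ->
  all cpred (zip (p :: s) (rcons s q)) /\
  \sum_(xy <- zip (p :: s) (rcons s q)) (fine (Bp xy.1.1 xy.1.2) - fine (A xy.2.1 xy.1.2))
   = fine (Bp p.1 p.2) + wwt p.2 s - fine (A q.1 (last p s).2).
Proof.
elim: s p => [|y s IH] p Hp Hw Hq.
  rewrite /= in Hq; split; first by rewrite /= /cpred /= Hp Hq.
  by rewrite big_cons big_nil /=; lra.
move: Hw => /= /and3P[Hy HAy Hw].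
have [IH1 IH2] := IH y Hy Hw Hq.
rewrite /= in IH1 IH2 *.
rewrite big_cons IH2 /cpred /= Hp HAy IH1; split => //.
rewrite /=; lra.
Qed.

Lemma closed_gc v s : s != [::] -> wok v s -> last v (map snd s) = v ->
  game_cycle A Bp s /\ cycle_weight A Bp s = wwt v s.
Proof.
case: s => [//|y s] _ /= /and3P[Hy HAy Hw].
rewrite (last_map snd s y) => Ev.
have Hq : A y.1 (last y s).2 \is a fin_num by rewrite Ev.
have [H1 H2] := CW _ _ _ Hy Hw Hq.
rewrite /game_cycle /cycle_weight rot1_cons H2 Ev; split.
  exact: H1.
rewrite /=; lra.
Qed.

Lemma split_last (t : seq ('I_r * 'I_c)) v : v \in map snd t ->
  exists t1 t2, [/\ t = t1 ++ t2, t1 != [::], last v (map snd t1) = v & v \notin map snd t2].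
Proof.
elim: t => [//|y t IH] /=.
case Hv : (v \in map snd t).
  move=> _; have [t1 [t2 [E1 E2 E3 E4]]] := IH Hv.
  exists (y :: t1), t2; split => //; first by rewrite E1.
  by case: t1 E1 E2 E3 => [//|z t1] _ _ /=.
rewrite inE Hv orbF => /eqP Ev.
by exists [:: y], t; split => //=; rewrite ?Hv // -Ev.
Qed.

Hypothesis Hcyc : forall s, game_cycle A Bp s -> 0 <= cycle_weight A Bp s.

Lemma simple_red s v : wok v s ->
  exists s0, [/\ wok v s0, uniq (v :: map snd s0) & wwt v s0 <= wwt v s].
Proof.
elim: s v => [|x s IH] v.
  by move=> _; exists [::]; split.
move=> /= /and3P[Hx HAx Hw].
have [s0 [H1 H2 H3]] := IH x.2 Hw.
pose t := x :: s0.
have Ht : wok v t by rewrite /= Hx HAx H1.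
have Hwt : wwt v t <= (fine (Bp x.1 x.2) - fine (A x.1 v)) + wwt x.2 s.
  by rewrite /= lerD2l.
have Hu : uniq (map snd t) by exact: H2.
case Hv : (v \in map snd t); last first.
  by exists t; split => //; rewrite cons_uniq Hv /=.
have [t1 [t2 [E1 E2 E3 E4]]] := split_last _ _ Hv.
rewrite E1 wok_cat E3 in Ht; case/andP: Ht => Ht1 Ht2.
have [Hg Hwe] := closed_gc _ _ E2 Ht1 E3.
have := Hcyc _ Hg; rewrite Hwe => Hpos.
exists t2; split => //.
  rewrite /= E4 /=.
  by move: Hu; rewrite E1 map_cat cat_uniq => /and3P[].
apply: le_trans Hwt.
by rewrite E1 wwt_cat E3; lra.
Qed.

Definition WW := \sum_i \sum_j `|fine (Bp i j)| + \sum_i \sum_j `|fine (A i j)|.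

Lemma le_dsum (F : 'I_r -> 'I_c -> R) i j : `|F i j| <= \sum_i \sum_j `|F i j|.
Proof.
apply: (le_trans (y := \sum_j `|F i j|)).
  by rewrite (bigD1 j) //= lerDl sumr_ge0.
by rewrite (bigD1 i) //= lerDl; apply: sumr_ge0 => k _; apply: sumr_ge0.
Qed.

Lemma wwt_size v s : wok v s -> - ((size s)%:R * WW) <= wwt v s.
Proof.
elim: s v => [|x s IH] v /=; first by rewrite mul0r oppr0.
case/and3P => _ _ Hw.
have := IH _ Hw.
have h1 := le_dsum (fun i j => fine (Bp i j)) x.1 x.2.
have h2 := le_dsum (fun i j => fine (A i j)) x.1 v.
rewrite /= in h1 h2.
move: h1 h2; rewrite /WW !ler_norml => /andP[h1 _] /andP[h2 h2'].
rewrite -natr1 mulrDl mul1r; lra.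
Qed.

Lemma W2 v s : wok v s -> - (c%:R * WW) <= wwt v s.
Proof.
move=> Hw.
have [s0 [H1 H2 H3]] := simple_red _ _ Hw.
apply: le_trans H3.
apply: le_trans (wwt_size _ _ H1).
have Hsz : (size s0 <= c)%N.
  have := max_card (mem (v :: map snd s0)).
  rewrite (card_uniqP H2) card_ord /= size_map.
  exact: ltnW.
have W0 : 0 <= WW.
  by rewrite /WW addr_ge0 // sumr_ge0 // => i _; apply: sumr_ge0.
rewrite lerN2 ler_wpM2r // ler_nat.
exact: Hsz.
Qed.

End Walks.
Arguments wok {R r c} A Bp v s.
Arguments wwt {R r c} A Bp v s.
Arguments WW {R r c} A Bp.

Lemma exists_nat_gt (R : realType) (x : R) : exists n : nat, (x < n%:R)%R.
Proof.
case: (lerP 0 x) => hx.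
  by exists (Num.Def.archi_bound x); apply: archi_boundP.
by exists 0%N.
Qed.

Lemma pigeon (T : finType) (Q : nat -> T -> Prop) :
  (forall n, exists t, Q n t) ->
  (forall n n' t, (n' <= n)%N -> Q n t -> Q n' t) ->
  exists t, forall n, Q n t.
Proof.
move=> H1 H2.
apply: contrapT => Hn.
have H3 : forall t, exists n, ~ Q n t.
  move=> t; apply: contrapT => Hc; apply: Hn; exists t => n.
  by apply: contrapT => Hq; apply: Hc; exists n.
have [N HN] := choice H3.
have [t Ht] := H1 (\max_t N t)%N.
apply: (HN t); apply: H2 Ht.
exact: leq_bigmax.
Qed.

Section Sharp.
Variables (R : realType) (r c : nat) (A B : 'M[\bar R]_(r, c)).
Hypothesis HA : forall j, exists k, A k j \is a fin_num.
Hypothesis HB : forall k, exists l, B k l \is a fin_num.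

Definition inner (x : 'I_c -> R) k :=
  \big[Order.max/-oo]_(l < c | B k l \is a fin_num) (B k l + (x l)%:E).

Lemma inner_eq x k : exists2 l, B k l \is a fin_num & inner x k = B k l + (x l)%:E.
Proof.
have [l Hl] := HB k. rewrite /inner.
have [l0 Hl0 ->] := @eq_bigmax _ _ _ -oo l (fun l => B k l \is a fin_num)
   (fun l => B k l + (x l)%:E) Hl (fun _ _ => leNye _).
by exists l0.
Qed.

Lemma inner_ge x k l : B k l \is a fin_num -> B k l + (x l)%:E <= inner x k.
Proof. by move=> Hl; rewrite /inner; apply: le_bigmax_cond. Qed.

Lemma Tform (a b : \bar R) (y : R) : a \is a fin_num -> b \is a fin_num ->
  - a + (b + y%:E) = (- fine a + (fine b + y))%:E.
Proof. by move=> Ha Hb; rewrite EFinD EFinN EFinD !fineK. Qed.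

Lemma sharp_eq x j : exists2 k, A k j \is a fin_num &
  (sharp A B x j = fine (- A k j + inner x k) /\
   forall k', A k' j \is a fin_num -> - A k j + inner x k <= - A k' j + inner x k').
Proof.
have [k Hk] := HA j.
rewrite /sharp.
have [k0 Hk0 E] := @eq_bigmin _ _ _ +oo k (fun k => A k j \is a fin_num)
   (fun k => - A k j + inner x k) Hk (fun _ _ => leey _).
exists k0 => //; split; first by rewrite E.
move=> k' Hk'; rewrite -E; exact: bigmin_le_cond.
Qed.

Lemma sharp_le x j k : A k j \is a fin_num ->
  exists2 l, B k l \is a fin_num &
  (sharp A B x j <= - fine (A k j) + (fine (B k l) + x l))%R.
Proof.
move=> Hk; have [k0 Hk0 [-> H]] := sharp_eq x j.
have [l Hl E] := inner_eq x k.
exists l => //.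
have := H k Hk; rewrite E.
have [l0 Hl0 ->] := inner_eq x k0.
by rewrite !Tform // lee_fin.
Qed.

Lemma sharp_ge x j : exists2 k, A k j \is a fin_num &
  forall l, B k l \is a fin_num ->
  (- fine (A k j) + (fine (B k l) + x l) <= sharp A B x j)%R.
Proof.
have [k0 Hk0 [-> H]] := sharp_eq x j.
exists k0 => // l Hl.
have := @inner_ge x k0 l Hl.
have [l0 Hl0 ->] := inner_eq x k0.
rewrite Tform //.
move=> H1.
have Hle : (fine (B k0 l) + x l <= fine (B k0 l0) + x l0)%R.
  by rewrite -lee_fin !EFinD !fineK.
rewrite /=; lra.
Qed.

Local Close Scope ereal_scope.

Notation f := (sharp A B).

Lemma sharp_mono x y : (forall l, x l <= y l) -> forall j, f x j <= f y j.
Proof.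
move=> Hxy j.
have [k Hk H] := sharp_ge y j.
have [l Hl H2] := sharp_le x j _ Hk.
apply: (le_trans H2); apply: le_trans (H l Hl).
by rewrite lerD2l lerD2l.
Qed.

Lemma sharp_shift x a j : f (fun l => x l + a) j = f x j + a.
Proof.
apply/eqP; rewrite eq_le; apply/andP; split.
- have [k Hk H] := sharp_ge x j.
  have [l Hl H2] := sharp_le (fun l => x l + a) j _ Hk.
  apply: (le_trans H2); have := H l Hl; lra.
- have [k Hk H] := sharp_ge (fun l => x l + a) j.
  have [l Hl H2] := sharp_le x j _ Hk.
  apply: le_trans (H l Hl); lra.
Qed.

Lemma iter_mono k x y : (forall l, x l <= y l) -> forall j, iter k f x j <= iter k f y j.
Proof.
elim: k => [//|k IH] Hxy j /=.
by apply: sharp_mono => l; apply: IH.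
Qed.

Lemma iter_shift k x a : iter k f (fun l => x l + a) = (fun l => iter k f x l + a).
Proof.
elim: k => [//|k IH] /=.
by rewrite IH; apply: funext => j; rewrite sharp_shift.
Qed.


Definition it k := iter k f (fun _ => 0).

Lemma le_sum_nonneg (I : finType) (F : I -> R) i :
  (forall j, 0 <= F j) -> F i <= \sum_j F j.
Proof. by move=> H; rewrite (bigD1 i) //= lerDl sumr_ge0. Qed.

Lemma K1 (rho : R) :
  (forall v, exists k, (1 <= k)%N /\ rho * k%:R <= it k v) ->
  exists x : 'I_c -> R, (forall v, 0 <= x v) /\ (forall v, x v + rho <= f x v).
Proof.
move=> H.
have [K HK] := choice H.
pose N := (\max_(v < c) K v)%N.
pose x v := \big[Order.max/0]_(k < N.+1) (it k v - rho * k%:R).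
have xge k v : (k <= N)%N -> it k v - rho * k%:R <= x v.
  move=> hk; rewrite /x.
  exact: (@le_bigmax _ _ _ 0 (fun k : 'I_N.+1 => it k v - rho * (k : nat)%:R) (Ordinal (n:=N.+1) (m:=k) hk)).
have step k v : (k <= N)%N -> it k.+1 v - rho * k.+1%:R <= f x v - rho.
  move=> hk.
  have := @sharp_mono (fun l => it k l + (- (rho * k%:R))) x (fun l => xge k l hk) v.
  rewrite sharp_shift /it /= -/(it k) => Hle.
  rewrite -natr1 mulrDr mulr1; lra.
exists x; split.
  move=> v; have := xge 0%N v isT; rewrite /it /= mulr0 subr0 //.
move=> v.
suff : x v <= f x v - rho by lra.
have [HK1 HK2] := HK v.
have base : 0 <= f x v - rho.
  have hKN : (K v <= N)%N by apply: (@leq_bigmax_cond _ _ _ v).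
  case E : (K v) HK1 HK2 hKN => [//|k] _ HK2 hKN.
  have := step k v (ltnW hKN); lra.
rewrite /x; apply: bigmax_le => // [[k hk]] _ /=.
case: k hk => [|k] hk.
  by rewrite /it /= mulr0 subr0.
by apply: step; rewrite ltnS in hk; apply: ltnW.
Qed.

Lemma K2 (rho : R) (x : 'I_c -> R) :
  (forall v, x v + rho <= f x v) ->
  exists C, forall k v, rho * k%:R - C <= it k v.
Proof.
move=> H.
pose M := \sum_v `|x v|.
have HM v : `|x v| <= M by apply: (@le_sum_nonneg _ (fun v => `|x v|) v) => ?.
have Hit k v : x v + rho * k%:R <= iter k f x v.
  elim: k v => [|k IH] v /=; first by rewrite mulr0 addr0.
  have := @sharp_mono (fun l => x l + rho * k%:R) (iter k f x) IH v.
  rewrite sharp_shift => H2.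
  have := H v; rewrite -natr1 mulrDr mulr1; lra.
exists (M + M) => k v.
have Hle : forall l, x l + - M <= 0.
  by move=> l; have := HM l; rewrite ler_norml => /andP[_]; lra.
have := @iter_mono k _ _ Hle v; rewrite iter_shift => H3.
have := Hit k v; have := HM v; rewrite ler_norml => /andP[H4 _].
rewrite /it; lra.
Qed.


Lemma gc_pair B' s p : game_cycle A B' s -> p \in zip s (rot 1 s) ->
  (B' p.1.1 p.1.2 \is a fin_num) /\ (A p.2.1 p.1.2 \is a fin_num).
Proof. by case/andP => _ /allP H /H /andP. Qed.

Lemma gc_elem B' s a : game_cycle A B' s -> a \in s -> B' a.1 a.2 \is a fin_num.
Proof.
move=> Hs Ha.
have : a \in unzip1 (zip s (rot 1 s)) by rewrite unzip1_zip // size_rot.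
by case/mapP => p Hp ->; case: (gc_pair _ _ _ Hs Hp).
Qed.

Lemma sr_fin (sigma : 'I_r -> 'I_c) i j : strat_restrict B sigma i j \is a fin_num ->
  j = sigma i /\ strat_restrict B sigma i j = B i j.
Proof. by rewrite /strat_restrict mxE; case: eqP. Qed.

Lemma K3 (rho : R) (x : 'I_c -> R) :
  (forall v, x v + rho <= f x v) ->
  exists sigma : 'I_r -> 'I_c, (forall k, B k (sigma k) \is a fin_num) /\
   forall s, game_cycle A (strat_restrict B sigma) s ->
     rho * (size s)%:R <= cycle_weight A (strat_restrict B sigma) s.
Proof.
move=> H.
have Hex : forall k, exists l, B k l \is a fin_num /\
    forall l', B k l' \is a fin_num -> fine (B k l') + x l' <= fine (B k l) + x l.
  move=> k; have [l0 H0] := HB k.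
  case: (@arg_maxP _ _ _ l0 (fun l => B k l \is a fin_num) (fun l => fine (B k l) + x l) H0).
  by move=> l Hl Hmax; exists l; split => // l' Hl'; apply: Hmax.
have [sigma Hs] := choice Hex.
exists sigma; split; first by move=> k; case: (Hs k).
have arc j k : A k j \is a fin_num ->
    x j + rho <= - fine (A k j) + (fine (B k (sigma k)) + x (sigma k)).
  move=> Hk; have [l Hl H2] := sharp_le x j _ Hk.
  have := (Hs k).2 l Hl; have := H j; lra.
move=> s Hgc.
set B' := strat_restrict B sigma.
set z := zip s (rot 1 s).
have Hz : forall p, p \in z ->
    x p.1.2 + rho <= - fine (A p.2.1 p.1.2) + (fine (B' p.2.1 p.2.2) + x p.2.2).
  move=> p Hp.
  have [_ HA1] := gc_pair _ _ _ Hgc Hp.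
  have Hp2 : p.2 \in s by rewrite -(mem_rot 1); apply: mem_zip2 Hp; rewrite size_rot.
  have [E1 E2] := sr_fin _ _ _ (gc_elem _ _ _ Hgc Hp2).
  by rewrite E2 E1; apply: arc.
have hsum : \sum_(p <- z) (x p.1.2 + rho) <=
    \sum_(p <- z) (- fine (A p.2.1 p.1.2) + (fine (B' p.2.1 p.2.2) + x p.2.2)).
  by rewrite big_seq [X in _ <= X]big_seq; apply: ler_sum.
rewrite !big_split /= sumrN in hsum.
rewrite sum_const_seq /z size_zip size_rot minnn in hsum.
rewrite (@sum_zip_rot2 _ _ s (fun b => x b.2)) (@sum_zip_rot1 _ _ s (fun b => x b.2)) in hsum.
rewrite (@sum_zip_rot2 _ _ s (fun b => fine (B' b.1 b.2))) in hsum.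
rewrite /cycle_weight sumrB (@sum_zip_rot1 _ _ s (fun b => fine (B' b.1 b.2))).
lra.
Qed.

Lemma W1 (sigma : 'I_r -> 'I_c) : (forall k, B k (sigma k) \is a fin_num) ->
  forall k v, exists s, wok A (strat_restrict B sigma) v s /\
                        wwt A (strat_restrict B sigma) v s <= it k v.
Proof.
move=> Hs k; elim: k => [|k IH] v.
  by exists [::]; split.
have [i Hi H] := sharp_ge (it k) v.
have [s [Hw Hwt]] := IH (sigma i).
exists ((i, sigma i) :: s); split.
  by rewrite /= /strat_restrict mxE eqxx Hs Hi Hw.
rewrite /= /strat_restrict mxE eqxx.
have := H _ (Hs i); rewrite /it /= -/(it k); lra.
Qed.

Lemma LB (sigma : 'I_r -> 'I_c) : (forall k, B k (sigma k) \is a fin_num) ->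
  (forall s, game_cycle A (strat_restrict B sigma) s ->
     0 <= cycle_weight A (strat_restrict B sigma) s) ->
  forall k v, - (c%:R * WW A (strat_restrict B sigma)) <= it k v.
Proof.
move=> Hs Hc k v.
have [s [Hw Hwt]] := W1 _ Hs k v.
apply: le_trans Hwt.
exact: W2.
Qed.

Local Open Scope classical_set_scope.

Lemma cyc_ge0 j C : (forall k, - C <= it k j) -> 0 <= cycle_time A B j.
Proof.
move=> HC.
rewrite /cycle_time.
have -> : limn (fun k : nat => (iter k (sharp A B) (fun=> 0%R) j / k%:R)%R)
   = xget 0 (fun l => (fun k : nat => (it k j / k%:R)%R) @ \oo --> l) by [].
case: xgetP => [l _ Hl|//].
apply: contrapT; move/negP; rewrite -ltNge => hl.
have := Hl; move/cvgrPdist_lt => /(_ (- l / 2)).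
have hl2 : 0 < - l / 2 by rewrite divr_gt0 // oppr_gt0.
move=> /(_ hl2) [N _ HN].
have [M HM] := exists_nat_gt _ ((C + 1) * (2 / - l)).
pose k := (maxn N M).+1.
have hk : (N <= k)%N by rewrite /k; apply: ltnW; rewrite ltnS leq_maxl.
have := HN k hk; rewrite /= => Hd.
have hkpos : (0 < k%:R :> R) by rewrite ltr0n.
have hkM : (M%:R < k%:R :> R) by rewrite ltr_nat /k ltnS leq_maxr.
have := HC k.
move: Hd; rewrite ltr_norml => /andP[Hd2 _].
have Hu : it k j / k%:R < l / 2.
  set u := it k j / k%:R in Hd2 *; set h := l / 2 in hl2 Hd2 *.
  have : h + h = l by rewrite /h; field.
  rewrite mulNr in hl2 Hd2. lra.
rewrite ltr_pdivrMr // in Hu.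
have Hl2 : (C + 1) < k%:R * (- l / 2).
  have := HM; rewrite -ltr_pdivrMr ?divr_gt0 ?oppr_gt0 //.
  rewrite invf_div => H1.
  have : (C + 1) * (2 / - l) < k%:R by lra.
  rewrite -ltr_pdivlMr ?divr_gt0 ?oppr_gt0 // invf_div //.
rewrite mulNr mulrN in Hl2; rewrite mulrC in Hu; lra.
Qed.

Definition Good (rho : R) := forall v, exists k, (1 <= k)%N /\ rho * k%:R <= it k v.

Lemma Good_down r1 r2 : r1 <= r2 -> Good r2 -> Good r1.
Proof.
move=> h12 H v; have [k [hk Hk]] := H v.
exists k; split => //; apply: le_trans Hk.
by rewrite ler_wpM2r // ler0n.
Qed.

Lemma Good_lower q : Good q -> exists C, forall k v, q * k%:R - C <= it k v.
Proof.
move=> H; have [x [_ Hx]] := K1 _ H.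
exact: K2 _ _ Hx.
Qed.

Lemma CONV rho : rho < 0 -> ~ Good rho -> (Phi A B < 0)%E.
Proof.
move=> hrho hG.
pose S := [set r' : R | Good r'].
have Sub r' : S r' -> r' <= rho.
  move=> Hr; rewrite leNgt; apply/negP => hlt.
  by apply: hG; apply: Good_down Hr; apply: ltW.
have Sne : S !=set0.
  exists (- \sum_v `|it 1 v|) => v; exists 1%N; split => //.
  rewrite mulr1 lerNl.
  apply: le_trans (@le_sum_nonneg _ (fun v => `|it 1 v|) v _); last by move=> ?.
  by rewrite -normrN ler_norm.
have Ssup : has_sup S by split => //; exists rho => r' /Sub.
set tau := sup S.
have htau : tau <= rho by apply: ge_sup => // r' /Sub.
have Lower q : q < tau -> exists C, forall k v, q * k%:R - C <= it k v.
  move=> hr.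
  have [e Se He] := sup_adherent (eps := tau - q) ltac:(by rewrite subr_gt0) Ssup.
  apply: Good_lower; apply: (@Good_down q e) => //.
  rewrite -/tau in He; lra.
have Upper q : tau < q -> exists v, forall k, (1 <= k)%N -> it k v < q * k%:R.
  move=> hr.
  have nS : ~ Good q.
    move=> Hr; have := sup_upper_bound Ssup Hr; rewrite -/tau; lra.
  apply: contrapT => Hn; apply: nS => v.
  apply: contrapT => Hv; apply: Hn; exists v => k hk.
  rewrite ltNge; apply/negP => Hle; apply: Hv; exists k; split => //.
have [v Hv] : exists v, forall n, forall k, (1 <= k)%N ->
    it k v < (tau + (n.+1%:R)^-1) * k%:R.
  apply: (@pigeon _ (fun n v => forall k, (1 <= k)%N ->
    it k v < (tau + (n.+1%:R)^-1) * k%:R)).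
    move=> n; apply: Upper.
    by rewrite ltrDl invr_gt0 ltr0n.
  move=> n n' t hn H k hk; apply: lt_le_trans (H k hk) _.
  rewrite ler_wpM2r ?ler0n // lerD2l lef_pV2 ?posrE ?ltr0n //.
  by rewrite ler_nat ltnS.
have Vup k : (1 <= k)%N -> it k v <= tau * k%:R.
  move=> hk; rewrite leNgt; apply/negP => hlt.
  have hkpos : (0 < k%:R :> R) by rewrite ltr0n.
  set d := it k v - tau * k%:R.
  have hd : 0 < d by rewrite /d subr_gt0.
  have [n Hn] := exists_nat_gt _ (k%:R / d).
  have := Hv n k hk.
  rewrite mulrDl.
  have : (n.+1%:R)^-1 * k%:R < d.
    have h1 : k%:R < n%:R * d by rewrite -ltr_pdivrMr.
    have h2 : n%:R * d < d * n.+1%:R by rewrite mulrC ltr_pM2l // ltr_nat.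
    rewrite mulrC ltr_pdivrMr ?ltr0n //.
    exact: lt_trans h1 h2.
  rewrite /d; set a := n.+1%:R^-1 * k%:R => h1 h2; lra.
have cv : (fun k : nat => it k v / k%:R) @ \oo --> tau.
  apply/cvgrPdist_le => eps heps.
  have [C HC] := Lower (tau - eps / 2) ltac:(rewrite ltrBlDr ltrDl divr_gt0 //).
  have [M HM] := exists_nat_gt _ (C * (2 / eps)).
  exists M.+1 => // k /= hk.
  have hk1 : (1 <= k)%N by apply: leq_trans hk.
  have hkpos : (0 < k%:R :> R) by rewrite ltr0n.
  have H1 := Vup k hk1.
  have H2 := HC k v.
  have hMk : (M%:R < k%:R :> R) by rewrite ltr_nat.
  have hC : C < k%:R * (eps / 2).
    rewrite -ltr_pdivrMr ?divr_gt0 // invf_div.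
    by apply: lt_trans HM _.
  set u := it k v / k%:R.
  have Hu1 : u <= tau by rewrite /u ler_pdivrMr.
  have Hu2 : tau - eps <= u.
    rewrite /u ler_pdivlMr // !mulrBl.
    rewrite !mulrBl in H2.
    have hb : eps * k%:R = eps / 2 * k%:R + eps / 2 * k%:R.
      by rewrite -mulrDl; congr (_ * _); field.
    rewrite mulrC in hC.
    set a := tau * k%:R in H2 *; set b := eps / 2 * k%:R in H2 hb hC *.
    set e := eps * k%:R in hb *.
    lra.
  rewrite ger0_norm ?subr_ge0 //; lra.
have Ev : cycle_time A B v = tau.
  by rewrite /cycle_time; apply: cvg_lim.
rewrite /Phi.
apply: (@le_lt_trans _ _ (cycle_time A B v)%:E).
  exact: bigmin_le.
by rewrite Ev lte_fin; lra.
Qed.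

End Sharp.

Local Close Scope ereal_scope.

Arguments gc_pair {R r c A B' s p}.
Arguments gc_elem {R r c A B' s a}.

Lemma sr_entry (R : realType) r c (Bm : 'M[\bar R]_(r, c)) sigma i j :
  strat_restrict Bm sigma i j = if j == sigma i then Bm i j else -oo%E.
Proof. by rewrite /strat_restrict mxE. Qed.

Section Concrete.
Variables (R : realType) (m n : nat) (V : 'M[\bar R]_(m, n)) (d : 'cV[\bar R]_m).
Hypotheses (hV : forall i j, V i j != +oo%E) (hd : forall i, d i ord0 != +oo%E).

Lemma matB_char (lam : R) (i : 'I_(m + n + 1)) (j : 'I_(n + 1)) :
  ((i < m)%N -> matB V d lam i j = matB V d 0 i j /\ matB V d 0 i j != +oo%E) /\
  ((m <= i)%N -> (matB V d lam i j = lam%:E /\ matB V d 0 i j = 0%:E) \/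
                 (matB V d lam i j = -oo%E /\ matB V d 0 i j = -oo%E)).
Proof.
rewrite /matB.
case: (split_ordP i) => [i1 ->|i2 ->]; rewrite ?col_mxEu ?col_mxEd.
  case: (split_ordP i1) => [i11 ->|i12 ->]; rewrite ?col_mxEu ?col_mxEd /=.
    split; last by rewrite leqNgt ltn_ord.
    move=> _; case: (split_ordP j) => [j1 ->|j2 ->]; rewrite ?row_mxEl ?row_mxEr; split => //.
    by rewrite (_ : j2 = ord0) ?hd //; apply: val_inj; rewrite /= (ord1 j2).
  split; first by [].
  move=> _; case: (split_ordP j) => [j1 ->|j2 ->]; rewrite ?row_mxEl ?row_mxEr.
    rewrite !mxE; case: eqP => _; [by left | by right].
  by rewrite !mxE; right.
split; first by rewrite /= ltnNge (leq_trans (leq_addr n m)) // leq_addr.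
move=> _; case: (split_ordP j) => [j1 ->|j2 ->]; rewrite ?row_mxEl ?row_mxEr !mxE.
  by right.
by left.
Qed.


Local Notation B l := (matB V d l).

Lemma finB lam i j : (B lam i j \is a fin_num) = (B 0 i j \is a fin_num).
Proof.
have [h1 h2] := matB_char lam i j.
case: (ltnP i m) => hi; first by rewrite (h1 hi).1.
by case: (h2 hi) => [[-> ->]|[-> ->]].
Qed.

Lemma B0_fin i j : B 0 i j != -oo%E -> B 0 i j \is a fin_num.
Proof.
move=> H; rewrite fin_numE H /=.
have [h1 h2] := matB_char 0 i j.
case: (ltnP i m) => hi; first by rewrite (h1 hi).2.
by case: (h2 hi) => [[_ ->]|[_ ->]].
Qed.

Lemma sr_fin_eq lam (sigma : 'I_(m + n + 1) -> 'I_(n + 1)) i j :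
  (strat_restrict (B lam) sigma i j \is a fin_num) =
  (strat_restrict (B 0) sigma i j \is a fin_num).
Proof. by rewrite !sr_entry; case: eqP => // _; rewrite finB. Qed.

Lemma sr_fine lam (sigma : 'I_(m + n + 1) -> 'I_(n + 1)) i j :
  strat_restrict (B lam) sigma i j \is a fin_num ->
  fine (strat_restrict (B lam) sigma i j) =
  fine (strat_restrict (B 0) sigma i j) + (if (m <= i)%N then lam else 0).
Proof.
rewrite !sr_entry; case: eqP => // _ Hf.
have [h1 h2] := matB_char lam i j.
case: (ltnP i m) => hi; first by rewrite (h1 hi).1 addr0.
case: (h2 hi) => [[-> ->]|[E _]]; first by rewrite /= add0r.
by rewrite E in Hf.
Qed.

Lemma gc_eq (A : 'M[\bar R]_(m + n + 1, n + 1)) lam sigma s :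
  game_cycle A (strat_restrict (B lam) sigma) s = game_cycle A (strat_restrict (B 0) sigma) s.
Proof.
rewrite /game_cycle; congr andb; apply: eq_all => xy.
by rewrite sr_fin_eq.
Qed.

Lemma sum_ind (T : Type) (s : seq T) (P : pred T) (a : R) :
  \sum_(t <- s) (if P t then a else 0) = a * (count P s)%:R.
Proof.
elim: s => [|t s IH]; first by rewrite big_nil mulr0.
rewrite big_cons IH /=; case: (P t) => /=.
  by rewrite -natr1 addrC mulrDr mulr1.
by rewrite add0r add0n.
Qed.

Lemma cw_eq (A : 'M[\bar R]_(m + n + 1, n + 1)) lam sigma s :
  game_cycle A (strat_restrict (B lam) sigma) s ->
  cycle_weight A (strat_restrict (B lam) sigma) s =
  cycle_weight A (strat_restrict (B 0) sigma) s +
    lam * (count (fun x : 'I_(m + n + 1) * 'I_(n + 1) => (m <= x.1)%N) s)%:R.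
Proof.
move=> Hg.
rewrite /cycle_weight.
rewrite big_seq.
under eq_bigr => xy Hxy.
  rewrite (sr_fine _ _ _ _ (gc_pair Hg Hxy).1).
  over.
rewrite -big_seq.
rewrite (eq_bigr (fun xy : ('I_(m + n + 1) * 'I_(n + 1)) * ('I_(m + n + 1) * 'I_(n + 1)) =>
   (fine (strat_restrict (B 0) sigma xy.1.1 xy.1.2) - fine (A xy.2.1 xy.1.2)) +
   (if (m <= xy.1.1)%N then lam else 0))); last by move=> xy _; rewrite addrAC.
rewrite big_split /=.
by rewrite (@sum_zip_rot1 _ _ s (fun x => if (m <= x.1)%N then lam else 0)) sum_ind.
Qed.

Lemma sr_ffun (Bm : 'M[\bar R]_(m + n + 1, n + 1)) (sigma : 'I_(m + n + 1) -> 'I_(n + 1)) :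
  strat_restrict Bm (finfun sigma) = strat_restrict Bm sigma.
Proof. by apply/matrixP => i j; rewrite !sr_entry ffunE. Qed.

Lemma main_bwd (A0 : 'M[\bar R]_(m + n + 1, n + 1))
  (hA : forall j, exists i, A0 i j \is a fin_num)
  (hB : forall lam : R, forall i, exists l, B lam i l \is a fin_num) :
  (exists sigma : 'I_(m + n + 1) -> 'I_(n + 1),
    is_strategy (B 0) sigma /\
    forall s, game_cycle A0 (strat_restrict (B 0) sigma) s ->
      all (fun x : 'I_(m + n + 1) * 'I_(n + 1) => (x.1 < m)%N) s /\
      0 <= cycle_weight A0 (strat_restrict (B 0) sigma) s) ->
  forall lam : R, (0 <= Phi A0 (B lam))%E.
Proof.
move=> [sigma [Hs Hc]] lam.
have Hfin : forall k, B lam k (sigma k) \is a fin_num.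
  by move=> k; rewrite finB; apply: B0_fin; exact: Hs.
have Hcyc : forall s, game_cycle A0 (strat_restrict (B lam) sigma) s ->
    0 <= cycle_weight A0 (strat_restrict (B lam) sigma) s.
  move=> s Hg; rewrite cw_eq //.
  rewrite gc_eq in Hg; have [Hall Hw] := Hc s Hg.
  have -> : count (fun x : 'I_(m + n + 1) * 'I_(n + 1) => (m <= x.1)%N) s = 0%N.
    apply/eqP; rewrite -leqn0 leqNgt -has_count; apply/hasPn => x Hx.
    by rewrite -ltnNge; exact: (allP Hall x Hx).
  by rewrite mulr0 addr0.
rewrite /Phi; apply: le_bigmin => [|j _]; first exact: leey.
rewrite lee_fin.
apply: (@cyc_ge0 _ _ _ A0 (B lam) j ((n + 1)%:R * WW A0 (strat_restrict (B lam) sigma))).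
move=> k; exact: (@LB _ _ _ A0 (B lam) hA (hB lam) sigma Hfin Hcyc k j).
Qed.

Lemma main_fwd (A0 : 'M[\bar R]_(m + n + 1, n + 1))
  (hA : forall j, exists i, A0 i j \is a fin_num)
  (hB : forall lam : R, forall i, exists l, B lam i l \is a fin_num) :
  (forall lam : R, (0 <= Phi A0 (B lam))%E) ->
  (exists sigma : 'I_(m + n + 1) -> 'I_(n + 1),
    is_strategy (B 0) sigma /\
    forall s, game_cycle A0 (strat_restrict (B 0) sigma) s ->
      all (fun x : 'I_(m + n + 1) * 'I_(n + 1) => (x.1 < m)%N) s /\
      0 <= cycle_weight A0 (strat_restrict (B 0) sigma) s).
Proof.
move=> HP.
have Hgood : forall lam rho, rho < 0 -> Good _ _ _ A0 (B lam) rho.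
  move=> lam rho hr; apply: contrapT => hG.
  have h2 := @CONV _ _ _ A0 (B lam) hA (hB lam) rho hr hG.
  by have := HP lam; rewrite leNgt h2.
pose cnt (s : seq ('I_(m + n + 1) * 'I_(n + 1))) :=
  count (fun x : 'I_(m + n + 1) * 'I_(n + 1) => (m <= x.1)%N) s.
pose Q (N : nat) (sg : {ffun 'I_(m + n + 1) -> 'I_(n + 1)}) :=
  (forall k, B 0 k (sg k) \is a fin_num) /\
  forall s, game_cycle A0 (strat_restrict (B 0) sg) s ->
    - (N.+1%:R)^-1 * (size s)%:R <=
    cycle_weight A0 (strat_restrict (B 0) sg) s + (- N%:R) * (cnt s)%:R.
have Hex : forall N, exists sg, Q N sg.
  move=> N.
  have hr : - (N.+1%:R)^-1 < 0 :> R by rewrite oppr_lt0 invr_gt0 ltr0n.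
  have [x [_ Hx]] := @K1 _ _ _ A0 (B (- N%:R)) hA (hB (- N%:R)) _ (Hgood _ _ hr).
  have [sg [Hs Hc]] := @K3 _ _ _ A0 (B (- N%:R)) hA (hB (- N%:R)) _ _ Hx.
  exists (finfun sg); split.
    by move=> k; rewrite ffunE -(finB (- N%:R)); exact: Hs.
  move=> s; rewrite sr_ffun => Hg.
  rewrite -(gc_eq _ (- N%:R)) in Hg.
  by have := Hc s Hg; rewrite cw_eq.
have Anti : forall N N' sg, (N' <= N)%N -> Q N sg -> Q N' sg.
  move=> N N' sg hN [H1 H2]; split => // s Hg.
  have := H2 s Hg.
  have hsz : 0 <= (size s)%:R :> R by rewrite ler0n.
  have hc : 0 <= (cnt s)%:R :> R by rewrite ler0n.
  have e1 : - (N'.+1%:R)^-1 * (size s)%:R <= - (N.+1%:R)^-1 * (size s)%:R :> R.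
    apply: (ler_wpM2r hsz); rewrite lerN2 lef_pV2 ?posrE ?ltr0n //.
    by rewrite ler_nat ltnS.
  have e2 : (- N%:R) * (cnt s)%:R <= (- N'%:R) * (cnt s)%:R :> R.
    by apply: (ler_wpM2r hc); rewrite lerN2 ler_nat.
  move=> H; apply: le_trans e1 _; apply: le_trans H _; by rewrite lerD2l.
have [sg HQ] := pigeon _ _ Hex Anti.
exists sg; split.
  by move=> k; have := (HQ 0%N).1 k; rewrite fin_numE => /andP[].
move=> s Hg.
set w := cycle_weight A0 (strat_restrict (B 0) sg) s.
have Hcnt : cnt s = 0%N.
  apply/eqP; rewrite -leqn0 leqNgt; apply/negP => hc.
  have [N HN] := exists_nat_gt _ (w + (size s)%:R).
  have := (HQ N).2 s Hg; rewrite -/w.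
  have h1 : - (size s)%:R <= - (N.+1%:R)^-1 * (size s)%:R :> R.
    rewrite mulNr lerN2 ler_piMl ?ler0n // invf_le1 ?ltr0n //.
    by rewrite ler1n.
  have h2 : (- N%:R) * (cnt s)%:R <= - N%:R :> R.
    rewrite mulNr lerN2 -natrM ler_nat.
    by rewrite leq_pmulr.
  set a := - (N.+1%:R)^-1 * (size s)%:R in h1 *; set b := (- N%:R) * (cnt s)%:R in h2 *; lra.
split.
  apply/allP => x Hx; rewrite ltnNge; apply/negP => hx.
  have : (0 < cnt s)%N by rewrite -has_count; apply/hasP; exists x.
  by rewrite Hcnt.
rewrite leNgt; apply/negP => hw.
have [N HN] := exists_nat_gt _ ((size s)%:R / - w).
have := (HQ N).2 s Hg; rewrite -/w Hcnt mulr0 addr0.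
have h1 : (size s)%:R * (N.+1%:R)^-1 < - w.
  have hw' : 0 < - w by rewrite oppr_gt0.
  have e1 : (size s)%:R < N%:R * - w by rewrite -ltr_pdivrMr.
  have e2 : N%:R * - w < - w * N.+1%:R by rewrite mulrC ltr_pM2l // ltr_nat.
  rewrite ltr_pdivrMr ?ltr0n //.
  exact: lt_trans e1 e2.
rewrite mulNr mulrC; set a := (size s)%:R * (N.+1%:R)^-1 in h1 *; lra.
Qed.

End Concrete.

Local Open Scope ereal_scope.

Theorem proposition8 (R : realType) (m n : nat)
  (U V : 'M[\bar R]_(m, n)) (b d : 'cV[\bar R]_m)
  (p : 'cV[\bar R]_n) (q : 'rV[\bar R]_n)
  (hU : forall i j, U i j != +oo) (hV : forall i j, V i j != +oo)
  (hb : forall i, b i ord0 != +oo) (hd : forall i, d i ord0 != +oo)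
  (hp : forall i, p i ord0 != +oo) (hq : forall j, q ord0 j != -oo)
  (hA : forall j, exists i, matA U b p q i j \is a fin_num)
  (hB : forall lam : R, forall i, exists l, matB V d lam i l \is a fin_num) :
  (forall lam : R, 0 <= Phi (matA U b p q) (matB V d lam)) <->
  exists sigma : 'I_(m + n + 1) -> 'I_(n + 1),
    is_strategy (matB V d 0%R) sigma /\
    forall s : seq ('I_(m + n + 1) * 'I_(n + 1)),
      game_cycle (matA U b p q) (strat_restrict (matB V d 0%R) sigma) s ->
      all (fun x : 'I_(m + n + 1) * 'I_(n + 1) => (x.1 < m)%N) s /\
      (0 <= cycle_weight (matA U b p q) (strat_restrict (matB V d 0%R) sigma) s)%R.
Proof.
split.
  by move=> HP; exact: (@main_fwd R m n V d hV hd _ hA hB HP).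
by move=> H lam; exact: (@main_bwd R m n V d hV hd _ hA hB H lam).
Qed.
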